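(* Let $S$ be a string of length $n$ and $\tau,k$ positive integers. Given random access to the sorted list of starting positions of the occurrences in $S$ of an aperiodic substring $P$ of $S$, together with the number of these occurrences, one can check whether $P$ is $(\tau,k)$-resilient in $S$ in $\mathcal{O}(\tau+k)$ time.
   Context: An integer $p>0$ is a period of $P$ if $P[t]=P[t+p]$ for all $t\in[0,|P|-p)$; $\mathsf{per}(P)$ is the smallest period; $P$ is aperiodic if $\mathsf{per}(P)>|P|/2$. Here, a substring $P$ of $S$ is $(\tau,k)$-resilient in $S$ if $P$ occurs at least $\tau$ times in every string obtained from $S$ by replacing the letters at at most $k$ positions with a letter $\#$ not in the alphabet of $S$. *)

(* Defs.v *)
From mathcomp Require Import all_boot.
Set Implicit Arguments. Unset Strict Implicit. Unset Printing Implicit Defensive.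

Section Strings.
Variable T : eqType.

Definition is_period (P : seq T) (p : nat) : bool :=
  (0 < p) && all (fun t => onth P t == onth P (t + p)) (iota 0 (size P - p)).

Lemma is_period_exists (P : seq T) : exists p, is_period P p.
Proof.
exists (size P).+1; rewrite /is_period /=.
by have -> : size P - (size P).+1 = 0 by apply/eqP; rewrite subn_eq0 leqnSn.
Qed.

Definition per (P : seq T) : nat := ex_minn (is_period_exists P).

Definition aperiodic (P : seq T) : bool := size P < 2 * per P.

End Strings.
Section Strings2.
Variable T : eqType.
Definition occ_pos (U : eqType) (S P : seq U) : seq nat :=
  [seq i <- iota 0 (size S).+1 |
     (i + size P <= size S) && (take (size P) (drop i S) == P)].

Definition is_substring (P S : seq T) : Prop := exists i, i \in occ_pos S P.

(* Replace the letters at positions in D by the fresh letter # (= None). *)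
Definition hash_replace (S : seq T) (D : seq nat) : seq (option T) :=
  [seq (if i \in D then None else onth S i) | i <- iota 0 (size S)].

Definition resilient (tau k : nat) (S P : seq T) : Prop :=
  forall D : seq nat, size D <= k ->
    tau <= size (occ_pos (hash_replace S D) (map Some P)).
End Strings2.

Inductive instr : Type :=
| IConst  (d c : nat)
| IAdd    (d a b : nat)
| ISub    (d a b : nat)        (* mem[d] := mem[a] - mem[b] (truncated)*)
| ILoad   (d a : nat)
| IStore  (a s : nat)
| IQuery  (d a : nat)
| IJumpLt (a b l : nat)
| IHalt.                       (* stop; the answer is (mem[0] != 0)    *)

Definition memory := nat -> nat.

Definition upd (m : memory) (d v : nat) : memory :=
  fun j => if j == d then v else m j.

(* run prog oracle fuel pc mem : Some final memory if the program halts
   within [fuel] executed instructions (each instruction costs 1, the final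
   IHalt included); running past the end of the program also halts. *)
Fixpoint run (prog : seq instr) (oracle : nat -> nat) (fuel pc : nat)
    (m : memory) : option memory :=
  match fuel with
  | 0 => None
  | fuel'.+1 =>
    match nth IHalt prog pc with
    | IConst d c => run prog oracle fuel' pc.+1 (upd m d c)
    | IAdd d a b => run prog oracle fuel' pc.+1 (upd m d (m a + m b))
    | ISub d a b => run prog oracle fuel' pc.+1 (upd m d (m a - m b))
    | ILoad d a => run prog oracle fuel' pc.+1 (upd m d (m (m a)))
    | IStore a s => run prog oracle fuel' pc.+1 (upd m (m a) (m s))
    | IQuery d a => run prog oracle fuel' pc.+1 (upd m d (oracle (m a)))
    | IJumpLt a b l =>
        run prog oracle fuel' (if m a < m b then l else pc.+1) m
    | IHalt => Some m
    end
  end.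

Definition init_mem (n m cnt tau k : nat) : memory :=
  fun j => match j with
           | 0 => n | 1 => m | 2 => cnt | 3 => tau | 4 => k | _ => 0 end.

(* Main.v *)
Require Import Defs.
From mathcomp Require Import all_boot zify.

Fixpoint gm (m : nat) (l : seq nat) : nat :=
  match l with
  | x :: ((y :: r) as t) => if y - x < m then (gm m r).+1 else gm m t
  | _ => 0
  end.

Lemma gm2 m x y r : gm m [:: x, y & r] = if y - x < m then (gm m r).+1 else gm m (y :: r).
Proof. by []. Qed.
Lemma gm1 m x : gm m [:: x] = 0.
Proof. by []. Qed.

Lemma gm_mono_lip m n : forall l, size l <= n ->
  (forall x, gm m l <= gm m (x :: l)) /\ (forall x, gm m (x :: l) <= (gm m l).+1).
Proof.
elim: n => [|n IH] [|y r] // Hs.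
have [IH1 IH2] := IH r Hs.
split => x.
- rewrite gm2; case: ifP => _ //; exact: IH2.
- rewrite gm2; case: ifP => _; [exact: IH1 | exact: leqnSn].
Qed.

Lemma gm_mono m l x : gm m l <= gm m (x :: l).
Proof. by have [H _] := @gm_mono_lip m (size l) l (leqnn _); apply: H. Qed.

Lemma gm_size m n : forall l, size l <= n -> 2 * gm m l <= size l.
Proof.
elim: n => [|n IH] [|x [|y r]] // Hs.
rewrite gm2; case: ifP => _.
- have : size r <= n by simpl in Hs; lia.
  move/IH; simpl in Hs |- *; lia.
- have : size (y :: r) <= n by simpl in Hs |- *; lia.
  move/IH; simpl in Hs |- *; lia.
Qed.

Definition hit m (d x : nat) := (x <= d) && (d < x + m).
Definition Dest m (D l : seq nat) := count (fun x => has (fun d => hit m d x) D) l.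

Section Comb.
Variables (m p : nat).
Hypotheses (Hm : 0 < m) (Hp : m < 2 * p).
Definition R a b := a + p <= b.
Lemma R_trans : transitive R.
Proof. rewrite /R => y x z; lia. Qed.

Lemma sortedR_far x y r : sorted R [:: x, y & r] -> all (fun z => x + m < z) r.
Proof.
move=> /= /andP [Rxy Hp'].
have := order_path_min R_trans Hp'.
move: Rxy; rewrite /R => Rxy /allP H; apply/allP => z /H; lia.
Qed.

Lemma count_nohit d x r : d < x + m -> all (fun z => x + m <= z) r ->
  count (hit m d) r = 0.
Proof.
move=> Hd /allP H; apply/eqP; rewrite -leqn0 leqNgt -has_count; apply/hasPn => z /H.
rewrite /hit; lia.
Qed.

Lemma count_hit2 d l : sorted R l -> count (hit m d) l <= 2.
Proof.
elim: l => [|x r IH] //= Hs.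
have Hr := path_sorted Hs.
case: (boolP (hit m d x)) => Hx /=; last by rewrite add0n; apply: IH.
case: r Hs Hr {IH} => [|y r] //= Hs Hr.
have Hf := @sortedR_far x y r Hs.
rewrite (@count_nohit d x r); first by case: (hit m d y).
- by move: Hx; rewrite /hit; lia.
- apply/allP => z /(allP Hf); lia.
Qed.

Lemma Dest_cons_le d D l : Dest m (d :: D) l <= count (hit m d) l + Dest m D l.
Proof.
rewrite /Dest -count_predUI; apply: leq_trans (leq_addr _ _).
by apply: sub_count => x /=.
Qed.

Lemma Dest_U1 D l : sorted R l -> Dest m D l <= 2 * size D.
Proof.
move=> Hs; elim: D => [|d D IH] /=.
- by rewrite /Dest count_pred0.
- have := Dest_cons_le d D l; have := @count_hit2 d l Hs. lia.
Qed.
Lemma Dest_cons D x r : Dest m D (x :: r) = has (fun d => hit m d x) D + Dest m D r.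
Proof. by []. Qed.

Lemma Dest_rem0 d D l : d \in D -> Dest m D l <= count (hit m d) l + Dest m (rem d D) l.
Proof.
move=> Hd; rewrite /Dest.
rewrite (@eq_count _ _ (fun x => has (fun d0 => hit m d0 x) (d :: rem d D))).
  exact: (Dest_cons_le d (rem d D) l).
by move=> x; rewrite (perm_has _ (perm_to_rem Hd)).
Qed.

Lemma Dest_rem d D : d \in D -> exists D', size D' = size D - 1 /\
  forall l, Dest m D l <= count (hit m d) l + Dest m D' l.
Proof.
move=> Hd; exists (rem d D); split; first by rewrite size_rem // subn1.
by move=> l; apply: Dest_rem0.
Qed.

Lemma Dest_sub d D l : Dest m D l <= Dest m (d :: D) l.
Proof. by apply: sub_count => x /= ->; rewrite orbT. Qed.

Lemma Dest_U2 n : forall l D, size l <= n -> sorted R l -> Dest m D l <= size D + gm m l.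
Proof.
elim: n => [|n IH] [|x r] D Hs Hsort; try by rewrite /Dest.
have Hr := path_sorted Hsort.
rewrite Dest_cons.
case: (boolP (has (fun d => hit m d x) D)) => Hx.
- case/hasP: Hx => d Hd Hdx.
  have [D' [HsD HD']] := @Dest_rem d D Hd.
  have HD0 : 0 < size D by case: (D) Hd.
  case: r Hs Hsort Hr => [|y r'] Hs Hsort Hr.
  + rewrite /Dest /=; lia.
  + have Hf := @sortedR_far x y r' Hsort.
    have Rxy : x + p <= y by move: (Hsort) => /= /andP [].
    have Hdm : d < x + m by move: Hdx; rewrite /hit; lia.
    rewrite gm2; case: ifP => Hc.
    * rewrite Dest_cons.
      have Hr' := path_sorted Hr.
      have := HD' r'.
      rewrite (@count_nohit d x r' Hdm); last by apply/allP => z /(allP Hf); lia.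
      have Hn : size r' <= n by simpl in Hs; lia.
      have H1 := IH r' D' Hn Hr'.
      move: (H1) (HsD) (HD0); case: (has _ D) => /=; lia.
    * have := HD' [:: y & r'].
      rewrite (@count_nohit d x (y :: r') Hdm); last first.
        apply/allP => z; rewrite inE => /orP [/eqP -> | /(allP Hf)]; lia.
      have Hn : size (y :: r') <= n by simpl in Hs |- *; lia.
      have H1 := IH _ D' Hn Hr.
      move: (H1) (HsD) (HD0) => /=; lia.
- 
  have Hn : size r <= n by simpl in Hs |- *; lia.
  have H1 := IH r D Hn Hr.
  move: (H1) (gm_mono m r x) => /=; lia.
Qed.

Lemma Dest_L n : forall l kk, size l <= n -> sorted R l ->
  exists D, size D <= kk /\ minn (size l) (minn (2 * kk) (kk + gm m l)) <= Dest m D l.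
Proof.
elim: n => [|n IH] [|x r] kk Hs Hsort; try by exists [::]; split; [|simpl size; lia].
  by move: Hs.
case: kk => [|kk]; first by exists [::]; split => //; lia.
have Hr := path_sorted Hsort.
have Hsr : size r <= n by simpl in Hs |- *; lia.
have Hxy : forall y r', r = y :: r' -> x + p <= y.
  by move=> y r' Er; move: Hsort; rewrite Er /= /R => /andP [].
have Hclose : (exists y r', r = y :: r' /\ y - x < m) \/ gm m (x :: r) = gm m r.
  case: r {Hs Hsort Hr Hsr Hxy} => [|y r']; first by right.
  rewrite gm2; case: ifP => Hc; [left; by exists y, r' | by right].
case: Hclose => [[y [r' [Er Hc]]] | Hg].
- subst r.
  have Hx := Hxy y r' erefl.
  have Hr' := path_sorted Hr.
  have Hn : size r' <= n by simpl in Hs |- *; lia.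
  have [D' [HD' HL]] := IH r' kk Hn Hr'.
  exists (y :: D'); split; first by rewrite /=; lia.
  rewrite !Dest_cons gm2 Hc /=.
  have -> : hit m y x by rewrite /hit; lia.
  have -> : hit m y y by rewrite /hit; lia.
  have := Dest_sub y D' r'.
  simpl size; lia.
- rewrite Hg.
  have HG := @gm_size m (size r) r (leqnn _).
  have [DA [HA LA]] := IH r kk.+1 Hsr Hr.
  have [DB [HB LB]] := IH r kk Hsr Hr.
  case: (boolP ((2 * kk.+1 <= size r) || (kk.+1 + gm m r <= size r))) => Hcase.
  + exists DA; split => //.
    rewrite Dest_cons.
    case/orP: Hcase => Hc; lia.
  + exists (x :: DB); split; first by rewrite /=; lia.
    rewrite Dest_cons /=.
    have -> : hit m x x by rewrite /hit; lia.
    have := Dest_sub x DB r.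
    rewrite negb_or -!ltnNge in Hcase.
    case/andP: Hcase => H1 H2.
    lia.
Qed.

End Comb.

Section Str.
Variable T : eqType.

Lemma map_Some_onth (s : seq T) : map Some s = map (onth s) (iota 0 (size s)).
Proof.
elim: s => [|x s IH] //=.
have -> : iota 1 (size s) = map (addn 1) (iota 0 (size s)) by rewrite -iotaDl.
by rewrite IH -map_comp.
Qed.

Lemma map_Some_window (S : seq T) i m : i + m <= size S ->
  map Some (take m (drop i S)) = map (onth S) (iota i m).
Proof.
move=> H; rewrite map_take map_drop map_Some_onth -map_drop -map_take.
rewrite drop_iota take_iota add0n; congr (map _ (iota _ _)); lia.
Qed.

Lemma occ_onth (S P : seq T) i t : i \in occ_pos S P -> t < size P ->
  onth P t = onth S (i + t).
Proof.
rewrite mem_filter => /andP [/andP [Hi /eqP HP] _] Ht.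
rewrite -{1}HP onthE map_Some_window // (nth_map 0); last by rewrite size_iota.
by rewrite nth_iota.
Qed.

Lemma per_spec (P : seq T) : is_period P (per P) /\ forall q, is_period P q -> per P <= q.
Proof. by rewrite /per; case: ex_minnP => q Hq Hmin; split. Qed.

Lemma per_pos (P : seq T) : 0 < per P.
Proof. by have [/andP [] ] := per_spec P. Qed.

Lemma per_le (P : seq T) : 0 < size P -> per P <= size P.
Proof.
move=> H; have [_ Hm] := per_spec P; apply: Hm.
by rewrite /is_period H subnn.
Qed.

Lemma occ_gap (S P : seq T) i j : 0 < size P -> i \in occ_pos S P -> j \in occ_pos S P ->
  i < j -> i + per P <= j.
Proof.
move=> HP Hi Hj Hij.
case: (ltnP (j - i) (size P)) => Hd; last by have := @per_le P HP; lia.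
suff : per P <= j - i by lia.
have [_ Hm] := per_spec P; apply: Hm.
rewrite /is_period; apply/andP; split; first by lia.
apply/allP => t; rewrite mem_iota add0n => /andP [_ Ht].
rewrite (@occ_onth S P i t Hi); last by lia.
rewrite (@occ_onth S P i (t + (j - i)) Hi); last by lia.
have -> : i + (t + (j - i)) = j + t by lia.
rewrite -(@occ_onth S P j t Hj); last by lia.
by rewrite (@occ_onth S P i t Hi) //; lia.
Qed.

Lemma occ_sorted (S P : seq T) : 0 < size P -> sorted (R (per P)) (occ_pos S P).
Proof.
move=> HP.
have Hs : sorted ltn (occ_pos S P) by apply: sorted_filter; [exact: ltn_trans | exact: iota_ltn_sorted].
apply: (@sub_in_sorted _ (fun x => x \in occ_pos S P) ltn (R (per P)) _ (occ_pos S P) _ Hs).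
- by move=> x y Hx Hy Hxy; exact: (@occ_gap S P x y HP Hx Hy Hxy).
- by apply/allP.
Qed.

Lemma occ_hash (S P : seq T) D :
  occ_pos (hash_replace S D) (map Some P) =
  filter (fun i => ~~ has (fun d => hit (size P) d i) D) (occ_pos S P).
Proof.
rewrite /occ_pos -filter_predI size_map.
have Hsz : size (hash_replace S D) = size S by rewrite /hash_replace size_map size_iota.
rewrite Hsz; apply: eq_in_filter => i _ /=.
case: (leqP (i + size P) (size S)) => Hi; last by rewrite andbF.
rewrite /=.
have -> : (take (size P) (drop i S) == P) = (map Some (take (size P) (drop i S)) == map Some P).
  by rewrite (inj_eq (inj_map (@Some_inj _))).
rewrite map_Some_window //.
have -> : take (size P) (drop i (hash_replace S D)) =
    map (fun j => if j \in D then None else onth S j) (iota i (size P)).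
  rewrite /hash_replace -map_drop -map_take drop_iota take_iota add0n.
  congr (map _ (iota _ _)); lia.
case: (boolP (has _ D)) => /= Hh.
- apply/negbTE/eqP => Heq.
  case/hasP: Hh => d Hd Hdi.
  have : None \in map Some P.
    rewrite -Heq; apply/mapP; exists d; last by rewrite Hd.
    by rewrite mem_iota.
  by case/mapP.
- congr (_ == _); apply/eq_in_map => j; rewrite mem_iota => Hj.
  case: ifP => // HjD.
  by move/hasPn: Hh => /(_ j HjD); rewrite /hit Hj.
Qed.

End Str.

Definition prog : seq instr :=
  [:: IAdd 5 3 4; IAdd 6 5 4; IJumpLt 2 6 5; IConst 0 1; IHalt;
      IConst 9 1; IConst 10 2;
      IJumpLt 7 2 9; IJumpLt 11 9 22;
      IAdd 12 7 9; IJumpLt 12 2 12; IJumpLt 11 9 20;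
      IQuery 13 7; IQuery 14 12; ISub 15 14 13; IJumpLt 15 1 17; IJumpLt 11 9 20;
      IAdd 7 7 10; IAdd 8 8 9; IJumpLt 11 9 7;
      IAdd 7 7 9; IJumpLt 11 9 7;
      IAdd 16 5 8; IJumpLt 2 16 26; IConst 0 1; IHalt; IConst 0 0; IHalt].

Ltac st := match goal with
  | |- context[run _ _ ?f _ _] =>
      let f' := fresh "f" in destruct f as [|f']; [exfalso; lia | simpl; unfold upd; simpl]
  end.


Lemma conclude (r : option memory) (A B : Prop) :
  (exists mf, r = Some mf /\ (mf 0 != 0 <-> A)) -> (A <-> B) ->
  exists mf, r = Some mf /\ (mf 0 != 0 <-> B).
Proof. by move=> [mf [H1 H2]] H; exists mf; split => //; rewrite H2. Qed.

Ltac rw := repeat match goal with H : ?mem _ = _ |- _ => (match type of mem with memory => rewrite H end) end.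

Lemma loop_ok (o : seq nat) (m : nat) : forall d i M (mem : memory) f,
  size o - i <= d -> i <= size o ->
  mem 7 = i -> mem 8 = M -> mem 1 = m -> mem 2 = size o -> mem 9 = 1 ->
  mem 10 = 2 -> mem 11 = 0 -> 10 * (size o - i) + 6 <= f ->
  exists mf, run prog (fun j => nth 0 o j) f 7 mem = Some mf /\
    ((mf 0 != 0) <-> mem 5 + (M + gm m (drop i o)) <= size o).
Proof.
elim=> [|d IH] i M mem f Hd Hi H7 H8 H1 H2 H9 H10 H11 Hf;
  (case: (ltnP i (size o)) => Hlt; last first).
- have Ei : i = size o by lia.
  rewrite Ei in H7 Hf *.
  rewrite /prog. st. rewrite H7 H2 ltnn. st. rewrite H11 H9 /=. st. st.
  rewrite H2 H8 drop_size /=.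
  case: ifP => Hlt'; st; st; eexists; (split; first reflexivity); simpl; lia.
- exfalso; lia.
- have Ei : i = size o by lia.
  rewrite Ei in H7 Hf *.
  rewrite /prog. st. rewrite H7 H2 ltnn. st. rewrite H11 H9 /=. st. st.
  rewrite H2 H8 drop_size /=.
  case: ifP => Hlt'; st; st; eexists; (split; first reflexivity); simpl; lia.
- rewrite /prog. st. rw. rewrite Hlt. st. st. rw.
  case: ifP => Hlt2.
  + st. st. st. st. rw. case: ifP => Hc.
    * st. st. st. rw.
      eapply conclude; first (eapply (IH i.+2 M.+1); simpl; rw; try lia).
      simpl. rewrite addn1 in Hc.
      have Hlt2' : i.+1 < size o by lia.
      rewrite (drop_nth 0 Hlt) (drop_nth 0 Hlt2') gm2 Hc; lia.
    * st. rw. st. st. rw.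
      eapply conclude; first (eapply (IH i.+1 M); simpl; rw; try lia).
      simpl. rewrite addn1 in Hc.
      have Hlt2' : i.+1 < size o by lia.
      rewrite (drop_nth 0 Hlt) (drop_nth 0 Hlt2') gm2 Hc -(drop_nth 0 Hlt2'); lia.
  + st. rw. st. st. rw.
    eapply conclude; first (eapply (IH i.+1 M); simpl; rw; try lia).
    simpl.
    rewrite (drop_nth 0 Hlt) (@drop_oversize _ i.+1 o); last by lia.
    rewrite gm1 /=; lia.
Qed.

Lemma prog_ok (o : seq nat) (n m tau k : nat) : 0 < tau -> 0 < k ->
  exists mf, run prog (fun j => nth 0 o j) (40 * (tau + k)) 0
     (init_mem n m (size o) tau k) = Some mf /\
  (mf 0 != 0 <-> (tau + 2 * k <= size o \/ tau + k + gm m o <= size o)).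
Proof.
move=> Ht Hk.
have : 11 + 10 * (tau + 2 * k) <= 40 * (tau + k) by lia.
move: (40 * (tau + k)) => f Hf.
rewrite /prog. st. st. st.
case: ifP => Hc.
- st. st.
  eapply conclude; first (eapply (@loop_ok o m (size o) 0 0); simpl; try lia).
  simpl; rewrite drop0; lia.
- st. st. eexists; split; first reflexivity. simpl; lia.
Qed.

Lemma size_filter_Dest m D l :
  size (filter (fun i => ~~ has (fun d => hit m d i) D) l) + Dest m D l = size l.
Proof.
rewrite size_filter /Dest addnC -(count_predC (fun x => has (fun d => hit m d x) D) l).
by congr (_ + _); apply: eq_count.
Qed.

Lemma resilient_iff (T : eqType) (S P : seq T) tau k :
  0 < tau -> 0 < size P -> aperiodic P ->
  resilient tau k S P <->
  (tau + 2 * k <= size (occ_pos S P) \/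
   tau + k + gm (size P) (occ_pos S P) <= size (occ_pos S P)).
Proof.
move=> Ht HP Hap.
have Hp : size P < 2 * per P by [].
have Hs := @occ_sorted T S P HP.
split.
- move=> Hres.
  have [D [HD HL]] := @Dest_L (size P) (per P) HP Hp _ (occ_pos S P) k (leqnn _) Hs.
  have := Hres D HD.
  rewrite occ_hash.
  have := size_filter_Dest (size P) D (occ_pos S P).
  lia.
- move=> H D HD.
  rewrite occ_hash.
  have := size_filter_Dest (size P) D (occ_pos S P).
  have := @Dest_U1 (size P) (per P) HP Hp D _ Hs.
  have := @Dest_U2 (size P) (per P) HP Hp _ (occ_pos S P) D (leqnn _) Hs.
  lia.
Qed.

Theorem lemma4 :
  exists (prog : seq instr) (c : nat),
  forall (T : eqType) (S P : seq T) (tau k : nat),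
    0 < tau -> 0 < k ->
    0 < size P -> is_substring P S -> aperiodic P ->
    exists mfinal : memory,
      run prog (fun i => nth 0 (occ_pos S P) i) (c * (tau + k)) 0
          (init_mem (size S) (size P) (size (occ_pos S P)) tau k)
        = Some mfinal /\
      ((mfinal 0 != 0) <-> resilient tau k S P).
Proof.
exists prog, 40 => T S P tau k Ht Hk HP _ Hap.
have [mf [Hr Hiff]] := @prog_ok (occ_pos S P) (size S) (size P) tau k Ht Hk.
exists mf; split => //.
rewrite Hiff; symmetry; exact: resilient_iff.
Qed.
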